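(* Let $X$ be a finite connected poset and $F$ a field with $\mathrm{char}(F)\ne 2$. Then every bijective $F$-linear map $\varphi:I(X,F)\to I(X,F)$ satisfying $\varphi(E(I(X,F)))\subseteq E(I(X,F))$ is either an automorphism or an anti-automorphism of $I(X,F)$.
   Context: $I(X,F)$ is the incidence algebra of the locally finite poset $X$ over $F$ (functions $f:X\times X\to F$ vanishing unless $x\le y$, with product $(fg)(x,y)=\sum_{x\le z\le y}f(x,z)g(z,y)$). A poset is connected if any two elements are joined by a finite sequence of elements in which consecutive elements are comparable. $E(A)$ denotes the set of idempotents of a ring $A$. *)

(* Defs.v *)
From HB Require Import structures.
From mathcomp Require Import all_boot all_order all_algebra.
Set Implicit Arguments. Unset Strict Implicit. Unset Printing Implicit Defensive.
Import Order.TTheory GRing.Theory.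
Local Open Scope ring_scope.

Section Incidence.
Variables (d : Order.disp_t) (X : finPOrderType d) (F : fieldType).

Definition incid_pred : pred {ffun X * X -> F} :=
  fun f => [forall p : X * X, (f p != 0) ==> (p.1 <= p.2)%O].

Definition incid := {f : {ffun X * X -> F} | incid_pred f}.

Definition incid_res (h : X * X -> F) : {ffun X * X -> F} :=
  [ffun p => if (p.1 <= p.2)%O then h p else 0].

Lemma incid_resP h : incid_pred (incid_res h).
Proof.
apply/forallP => p; rewrite ffunE; case: ifP => _; [by rewrite implybT | by rewrite eqxx].
Qed.

Definition incid_mk (h : X * X -> F) : incid := exist _ (incid_res h) (incid_resP h).

Definition incid_zero : incid := incid_mk (fun _ => 0).
Definition incid_one : incid := incid_mk (fun p => if p.1 == p.2 then 1 else 0).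
Definition incid_add (f g : incid) : incid := incid_mk (fun p => val f p + val g p).
Definition incid_scale (a : F) (f : incid) : incid := incid_mk (fun p => a * val f p).
(* convolution product: (fg)(x,y) = \sum_{x <= z <= y} f(x,z) g(z,y)
   (the restriction to x <= y is harmless: the sum is empty otherwise) *)
Definition incid_mul (f g : incid) : incid :=
  incid_mk (fun p => \sum_(z : X | (p.1 <= z)%O && (z <= p.2)%O) val f (p.1, z) * val g (z, p.2)).

Definition incid_idem (e : incid) : Prop := incid_mul e e = e.

Definition incid_linear (phi : incid -> incid) : Prop :=
  forall (a : F) (f g : incid),
    phi (incid_add (incid_scale a f) g) = incid_add (incid_scale a (phi f)) (phi g).

Definition incid_automorphism (phi : incid -> incid) : Prop :=
  [/\ bijective phi, incid_linear phi, phi incid_one = incid_one &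
      forall f g, phi (incid_mul f g) = incid_mul (phi f) (phi g)].

Definition incid_antiautomorphism (phi : incid -> incid) : Prop :=
  [/\ bijective phi, incid_linear phi, phi incid_one = incid_one &
      forall f g, phi (incid_mul f g) = incid_mul (phi g) (phi f)].

End Incidence.

Definition poset_connected (d : Order.disp_t) (X : finPOrderType d) : Prop :=
  forall x y : X, connect (fun a b : X => (a >=< b)%O) x y.

(* Main.v *)
Set Warnings "-notation-overridden,-ambiguous-paths,-redundant-canonical-projection,-projection-no-head-constant".
From HB Require Import structures.
Require Import Defs.
From mathcomp Require Import all_boot all_order all_algebra.
From mathcomp Require Import ring.
Set Implicit Arguments. Unset Strict Implicit. Unset Printing Implicit Defensive.
Import Order.TTheory GRing.Theory.
Local Open Scope ring_scope.

Section Alg.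
Variables (d : Order.disp_t) (X : finPOrderType d) (F : fieldType).
Local Notation A := (incid X F).

HB.instance Definition _ := Choice.copy A {f : {ffun X * X -> F} | incid_pred f}.
HB.instance Definition _ := SubType.copy A {f : {ffun X * X -> F} | incid_pred f}.

Lemma incid_ext (f g : A) : (forall p, val f p = val g p) -> f = g.
Proof. by move=> h; apply: val_inj; apply/ffunP. Qed.

Lemma incid0 (f : A) p : ~~ (p.1 <= p.2)%O -> val f p = 0.
Proof.
move=> np; have /forallP/(_ p) := valP f.
by case: eqP => // _; rewrite (negbTE np).
Qed.

Lemma val_mk h p : val (incid_mk h) p = if (p.1 <= p.2)%O then h p else 0.
Proof. by rewrite /= ffunE. Qed.

Lemma val_mk' h p : (~~ (p.1 <= p.2)%O -> h p = 0) -> val (incid_mk h) p = h p.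
Proof. by move=> H; rewrite val_mk; case: ifP => // /negbT /H ->. Qed.

Definition incid_opp (f : A) : A := incid_scale (-1) f.

Lemma valD (f g : A) p : val (incid_add f g) p = val f p + val g p.
Proof. by rewrite val_mk'// => /[dup] /(incid0 f) -> /(incid0 g) ->; rewrite addr0. Qed.
Lemma valZ a (f : A) p : val (incid_scale a f) p = a * val f p.
Proof. by rewrite val_mk'// => /(incid0 f) ->; rewrite mulr0. Qed.
Lemma valN (f : A) p : val (incid_opp f) p = - val f p.
Proof. by rewrite valZ mulN1r. Qed.
Lemma val0 p : val (incid_zero X F) p = 0.
Proof. by rewrite val_mk'. Qed.

Lemma iaddA : associative (@incid_add d X F).
Proof. by move=> f g h; apply: incid_ext => p; rewrite !valD addrA. Qed.
Lemma iaddC : commutative (@incid_add d X F).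
Proof. by move=> f g; apply: incid_ext => p; rewrite !valD addrC. Qed.
Lemma iadd0 : left_id (incid_zero X F) (@incid_add d X F).
Proof. by move=> f; apply: incid_ext => p; rewrite !valD val0 add0r. Qed.
Lemma iaddN : left_inverse (incid_zero X F) incid_opp (@incid_add d X F).
Proof. by move=> f; apply: incid_ext => p; rewrite !valD valN val0 addNr. Qed.

HB.instance Definition _ := GRing.isZmodule.Build A iaddA iaddC iadd0 iaddN.

Lemma vD (f g : A) p : val (f + g) p = val f p + val g p. Proof. exact: valD. Qed.
Lemma vN (f : A) p : val (- f) p = - val f p. Proof. exact: valN. Qed.
Lemma v0 p : val (0 : A) p = 0. Proof. exact: val0. Qed.
Lemma vB (f g : A) p : val (f - g) p = val f p - val g p. Proof. by rewrite vD vN. Qed.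

Lemma valM (f g : A) x y :
  val (incid_mul f g) (x, y) = \sum_z val f (x, z) * val g (z, y).
Proof.
rewrite val_mk /=; case: ifP => [lexy|nlexy].
  rewrite [RHS](bigID (fun z => (x <= z)%O && (z <= y)%O)) /= [X in _ = _ + X]big1 ?addr0 //.
  move=> z /negbTE; case lxz: (x <= z)%O => /= nzy.
    by rewrite (@incid0 g (z, y)) ?mulr0 // nzy.
  by rewrite (@incid0 f (x, z)) ?mul0r // lxz.
rewrite big1 // => z _.
case lxz: (x <= z)%O; last by rewrite (@incid0 f (x, z)) ?mul0r // lxz.
case lzy: (z <= y)%O; last by rewrite (@incid0 g (z, y)) ?mulr0 // lzy.
by rewrite (le_trans lxz lzy) in nlexy.
Qed.

Lemma valM' (f g : A) p :
  val (incid_mul f g) p = \sum_z val f (p.1, z) * val g (z, p.2).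
Proof. by case: p => x y; rewrite valM. Qed.

Lemma val1 x y : val (incid_one X F) (x, y) = if x == y then 1 else 0.
Proof. by rewrite val_mk'//=; case: eqP => // -> ; rewrite lexx. Qed.

Lemma imulA : associative (@incid_mul d X F).
Proof.
move=> f g h; apply: incid_ext => -[x y]; rewrite !valM.
under eq_bigr => z _ do rewrite valM big_distrr /=.
under [RHS]eq_bigr => z _ do rewrite valM big_distrl /=.
rewrite exchange_big; apply: eq_bigr => z _; apply: eq_bigr => w _.
by rewrite mulrA.
Qed.
Lemma imul1 : left_id (incid_one X F) (@incid_mul d X F).
Proof.
move=> f; apply: incid_ext => -[x y]; rewrite valM (bigD1 x) //= val1 eqxx mul1r.
by rewrite big1 ?addr0 // => z /negbTE zx; rewrite val1 eq_sym zx mul0r.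
Qed.
Lemma imulr1 : right_id (incid_one X F) (@incid_mul d X F).
Proof.
move=> f; apply: incid_ext => -[x y]; rewrite valM (bigD1 y) //= val1 eqxx mulr1.
by rewrite big1 ?addr0 // => z /negbTE zx; rewrite val1 zx mulr0.
Qed.
Lemma imulDl : left_distributive (@incid_mul d X F) (@incid_add d X F).
Proof.
move=> f g h; apply: incid_ext => -[x y]; rewrite valD !valM -big_split /=.
by apply: eq_bigr => z _; rewrite valD mulrDl.
Qed.
Lemma imulDr : right_distributive (@incid_mul d X F) (@incid_add d X F).
Proof.
move=> f g h; apply: incid_ext => -[x y]; rewrite valD !valM -big_split /=.
by apply: eq_bigr => z _; rewrite valD mulrDr.
Qed.

HB.instance Definition _ := GRing.Zmodule_isPzRing.Build A imulA imul1 imulr1 imulDl imulDr.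

Lemma iscaleA a b (f : A) : incid_scale a (incid_scale b f) = incid_scale (a * b) f.
Proof. by apply: incid_ext => p; rewrite !valZ mulrA. Qed.
Lemma iscale1 : left_id 1 (@incid_scale d X F).
Proof. by move=> f; apply: incid_ext => p; rewrite !valZ mul1r. Qed.
Lemma iscaleDr : right_distributive (@incid_scale d X F) +%R.
Proof. by move=> a f g; apply: incid_ext => p; rewrite !(valZ, vD) mulrDr. Qed.
Lemma iscaleDl (f : A) : {morph (@incid_scale d X F)^~ f : a b / a + b}.
Proof. by move=> a b; apply: incid_ext => p; rewrite !(valZ, vD) mulrDl. Qed.

HB.instance Definition _ := GRing.Zmodule_isLmodule.Build F A iscaleA iscale1 iscaleDr iscaleDl.

Lemma v1 (x y : X) : val (1 : A) (x, y) = if x == y then 1 else 0.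
Proof. exact: val1. Qed.

Goal forall (f g : A) (a : F), a *: f + g = incid_add (incid_scale a f) g. by []. Qed.
Goal forall (f g : A), f * g = incid_mul f g. by []. Qed.
Goal (1 : A) = incid_one X F. by []. Qed.

Definition E (x y : X) : A := incid_mk (fun p => if p == (x, y) then 1 else 0).
Local Notation e x := (E x x).

Lemma vE x y p : val (E x y) p = if (p == (x, y)) && (x <= y)%O then 1 else 0.
Proof. by rewrite val_mk; case: eqP => [->|]; rewrite /= ?andbT ?andbF; case: ifP. Qed.

Lemma vM (f g : A) p : val (f * g) p = \sum_z val f (p.1, z) * val g (z, p.2).
Proof. exact: valM'. Qed.

Lemma vdiag (f g : A) t : val (f * g) (t, t) = val f (t, t) * val g (t, t).
Proof.
rewrite vM (bigD1 t) //= big1 ?addr0 // => z zt.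
case: (boolP (t <= z)%O) => tz; last by rewrite incid0 ?mul0r.
case: (boolP (z <= t)%O) => zt'; last by rewrite (@incid0 g (z, t)) ?mulr0.
by move: zt; rewrite eq_le tz zt'.
Qed.

Lemma vZ a (f : A) p : val (a *: f) p = a * val f p. Proof. exact: valZ. Qed.

Lemma scalerAl' a (f g : A) : (a *: f) * g = a *: (f * g).
Proof.
apply: incid_ext => p; rewrite vZ !vM big_distrr; apply: eq_bigr => z _.
by rewrite vZ -mulrA.
Qed.
Lemma scalerAr' a (f g : A) : f * (a *: g) = a *: (f * g).
Proof.
apply: incid_ext => p; rewrite vZ !vM big_distrr; apply: eq_bigr => z _.
by rewrite vZ; exact: mulrCA.
Qed.

Lemma v_el s (f : A) p : val (e s * f) p = if p.1 == s then val f p else 0.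
Proof.
case: p => u v; rewrite vM /=; case: (u =P s) => [->|us].
  rewrite (bigD1 s) //= vE eqxx lexx mul1r big1 ?addr0 // => z zs.
  by rewrite vE xpair_eqE eqxx (negbTE zs) mul0r.
rewrite big1 // => z _; rewrite vE xpair_eqE.
by case: eqP => //=; rewrite mul0r.
Qed.

Lemma v_er t (f : A) p : val (f * e t) p = if p.2 == t then val f p else 0.
Proof.
case: p => u v; rewrite vM /=; case: (v =P t) => [->|vt].
  rewrite (bigD1 t) //= vE eqxx lexx mulr1 big1 ?addr0 // => z zs.
  by rewrite vE xpair_eqE eqxx (negbTE zs) mulr0.
rewrite big1 // => z _; rewrite vE xpair_eqE.
by case: (v =P t) => //=; rewrite andbF mulr0.
Qed.

Lemma eAe s t (f : A) : ~~ (s <= t)%O -> e s * f * e t = 0.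
Proof.
move=> st; apply: incid_ext => p; rewrite v_er v_el v0.
case: eqP => // p2; case: eqP => // p1.
by rewrite incid0 // p1 p2.
Qed.

Lemma EE a b c d' : E a b * E c d' =
  if (b == c) && (a <= b)%O && (c <= d')%O then E a d' else 0.
Proof.
apply: incid_ext => -[u v]; rewrite vM /=.
case: ifP => [/andP[/andP[/eqP bc ab] cd]|H].
  subst c; rewrite (bigD1 b) //= big1 => [|z zb]; last first.
    by rewrite !vE !xpair_eqE (negbTE zb) /= andbF mul0r.
  rewrite addr0 !vE !xpair_eqE eqxx ab cd (le_trans ab cd) !andbT.
  by case: (u == a); case: (v == d'); rewrite ?mulr1 ?mul1r ?mulr0 ?mul0r.
rewrite v0 big1 // => z _; rewrite !vE !xpair_eqE.
have [->|zb] := eqVneq z b; last by rewrite andbF andFb mul0r.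
have [bc|bc] := eqVneq b c; last by rewrite /= mulr0.
subst c; rewrite /= andbT.
move: H; rewrite eqxx /=; case: (a <= b)%O; case: (b <= d')%O; rewrite /= ?andbF ?mulr0 ?mul0r //.
Qed.

Lemma vsum I (s : seq I) (P : pred I) (G : I -> A) q :
  val (\sum_(p <- s | P p) G p) q = \sum_(p <- s | P p) val (G p) q.
Proof. elim/big_rec2: _ => [|i y1 y2 _ <-]; [exact: v0 | exact: vD]. Qed.

Lemma decomp (f : A) : f = \sum_p val f p *: E p.1 p.2.
Proof.
apply: incid_ext => q; rewrite vsum.
under eq_bigr => p _ do rewrite vZ vE -surjective_pairing.
rewrite (bigD1 q) // eqxx /= big1 => [|p pq]; last by rewrite eq_sym (negbTE pq) mulr0.
rewrite addr0; case: (boolP (q.1 <= q.2)%O) => h; first by rewrite mulr1.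
by rewrite incid0 // mul0r.
Qed.

Lemma ex_max (S : pred X) x0 : S x0 -> exists2 x, S x & forall z, S z -> ~~ (x < z)%O.
Proof.
move=> Sx0; case: (arg_minnP (fun i => #|[set z | (i <= z)%O]|) Sx0) => x Sx Hmin.
exists x => // z Sz; apply/negP => xz.
have : [set w | (z <= w)%O] \proper [set w | (x <= w)%O].
  apply/properP; split.
    by apply/subsetP => w; rewrite !inE => /(le_trans (ltW xz)).
  by exists x; rewrite !inE ?lexx // -?lt_def lt_geF.
by move/proper_card; rewrite ltnNge Hmin.
Qed.

Lemma ex_min (S : pred X) x0 : S x0 -> exists2 x, S x & forall z, S z -> ~~ (z < x)%O.
Proof.
move=> Sx0; case: (arg_minnP (fun i => #|[set z | (z <= i)%O]|) Sx0) => x Sx Hmin.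
exists x => // z Sz; apply/negP => xz.
have : [set w | (w <= z)%O] \proper [set w | (w <= x)%O].
  apply/properP; split.
    by apply/subsetP => w; rewrite !inE => /le_trans; apply; apply: ltW.
  by exists x; rewrite !inE ?lexx // lt_geF.
by move/proper_card; rewrite ltnNge Hmin.
Qed.

Lemma cancel_l (u a : A) : (forall t, val u (t, t) = 1) -> u * a = 0 -> a = 0.
Proof.
move=> u1 ua; apply: incid_ext => -[x0 y0]; rewrite v0; apply/eqP/negPn/negP => nz.
have [x Sx xmax] := @ex_max (fun x => [exists y, val a (x, y) != 0]) x0
  (introT existsP (ex_intro _ y0 nz)).
case/existsP: Sx => y axy.
have : val (u * a) (x, y) = 0 by rewrite ua v0.
rewrite vM (bigD1 x) //= u1 mul1r big1 ?addr0; first by move/eqP; rewrite (negbTE axy).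
move=> z zx /=.
case: (boolP (x <= z)%O) => xz; last by rewrite incid0 ?mul0r.
have : ~~ [exists y, val a (z, y) != 0].
  by apply/negP => /xmax; rewrite lt_def zx xz.
by rewrite negb_exists => /forallP/(_ y)/negPn/eqP ->; rewrite mulr0.
Qed.

Lemma cancel_r (u a : A) : (forall t, val u (t, t) = 1) -> a * u = 0 -> a = 0.
Proof.
move=> u1 ua; apply: incid_ext => -[x0 y0]; rewrite v0; apply/eqP/negPn/negP => nz.
have [y Sy ymin] := @ex_min (fun y => [exists x, val a (x, y) != 0]) y0
  (introT existsP (ex_intro _ x0 nz)).
case/existsP: Sy => x axy.
have : val (a * u) (x, y) = 0 by rewrite ua v0.
rewrite vM (bigD1 y) //= u1 mulr1 big1 ?addr0; first by move/eqP; rewrite (negbTE axy).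
move=> z zy /=.
case: (boolP (z <= y)%O) => xz; last by rewrite (@incid0 u (z, y)) ?mulr0.
have : ~~ [exists x, val a (x, z) != 0].
  by apply/negP => /ymin; rewrite lt_def eq_sym zy xz.
by rewrite negb_exists => /forallP/(_ x)/negPn/eqP ->; rewrite mul0r.
Qed.

End Alg.
Arguments E {d X F} x y.



Lemma lc1 (R : comPzRingType) (c d a1 b1 k1 : R) :
  c - d = k1 * (a1 - b1) -> a1 = b1 -> c = d.
Proof. by move=> h e1; apply/eqP; rewrite -subr_eq0 h e1 subrr mulr0. Qed.
Lemma lc2 (R : comPzRingType) (c d a1 b1 a2 b2 k1 k2 : R) :
  c - d = k1 * (a1 - b1) + k2 * (a2 - b2) -> a1 = b1 -> a2 = b2 -> c = d.
Proof. by move=> h e1 e2; apply/eqP; rewrite -subr_eq0 h e1 e2 !subrr !mulr0 addr0. Qed.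
Lemma lc3 (R : comPzRingType) (c d a1 b1 a2 b2 a3 b3 k1 k2 k3 : R) :
  c - d = k1 * (a1 - b1) + k2 * (a2 - b2) + k3 * (a3 - b3) -> a1 = b1 -> a2 = b2 -> a3 = b3 -> c = d.
Proof. by move=> h e1 e2 e3; apply/eqP; rewrite -subr_eq0 h e1 e2 e3 !subrr !mulr0 !addr0. Qed.
Lemma lc4 (R : comPzRingType) (c d a1 b1 a2 b2 a3 b3 a4 b4 k1 k2 k3 k4 : R) :
  c - d = k1 * (a1 - b1) + k2 * (a2 - b2) + k3 * (a3 - b3) + k4 * (a4 - b4) ->
  a1 = b1 -> a2 = b2 -> a3 = b3 -> a4 = b4 -> c = d.
Proof. by move=> h e1 e2 e3 e4; apply/eqP; rewrite -subr_eq0 h e1 e2 e3 e4 !subrr !mulr0 !addr0. Qed.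

Section Jordan.
Variables (d : Order.disp_t) (X : finPOrderType d) (F : fieldType).
Local Notation A := (incid X F).
Hypothesis hF2 : (2 : F) != 0.

Lemma tf (f : A) : f + f = 0 -> f = 0.
Proof.
move=> h; apply: incid_ext => t; move/(congr1 (fun g : A => val g t)): h.
rewrite vD v0 -mulr2n -mulr_natl => /eqP; rewrite mulf_eq0 (negbTE hF2) /=.
by move/eqP.
Qed.

Ltac pwH H t := move/(congr1 (fun g : A => val g t)): H; rewrite ?(vD, vN, vB, v0) => H.

Lemma J0 (p q : A) : p * p = p -> q * q = q -> (p + q) * (p + q) = p + q ->
  p * q + q * p = 0.
Proof.
move=> hp hq; rewrite mulrDl !mulrDr hp hq => H.
apply: incid_ext => t; pwH H t.
by apply: (lc1 (k1 := 1) _ H); ring.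
Qed.

Lemma orth (p q : A) : p * p = p -> q * q = q -> p * q + q * p = 0 -> p * q = 0.
Proof.
move=> hp hq H.
have H1 : p * q + p * q * p = 0.
  by have := congr1 (fun z => p * z) H; rewrite mulrDr !mulrA hp mulr0.
have H2 : p * q * p + q * p = 0.
  by have := congr1 (fun z => z * p) H; rewrite mulrDl -!mulrA hp mul0r.
apply: tf; apply: incid_ext => t; pwH H t; pwH H1 t; pwH H2 t.
by apply: (lc3 (k1 := 1) (k2 := -1) (k3 := 1) _ H1 H2 H); ring.
Qed.

Lemma J2 (p q : A) : (p + q) * (p + q) = p + q -> (p - q) * (p - q) = p - q ->
  p * q + q * p = q.
Proof.
rewrite !(mulrDl, mulrDr, mulrBl, mulrBr, mulrN, mulNr, opprK) => H1 H2.
apply/eqP; rewrite -subr_eq0; apply/eqP; apply: tf.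
apply: incid_ext => t; pwH H1 t; pwH H2 t.
by apply: (lc2 (k1 := 1) (k2 := -1) _ H1 H2); ring.
Qed.

Lemma decQ (px py q : A) : px * px = px -> py * py = py -> px * py = 0 -> py * px = 0 ->
  px * q + q * px = q -> py * q + q * py = q -> q = px * q * py + py * q * px.
Proof.
move=> hx hy hxy hyx Hx Hy.
have e1 : px * q = px * q * py.
  by rewrite -{1}Hy mulrDr !mulrA hxy mul0r add0r.
have e2 : q * px = py * q * px.
  by rewrite -{1}Hy mulrDl -!mulrA hyx mulr0 addr0.
by rewrite -e1 -e2 Hx.
Qed.

End Jordan.


Lemma ifT' (T : Type) (a b : T) : (if true then a else b) = a. Proof. by []. Qed.
Lemma ifF' (T : Type) (a b : T) : (if false then a else b) = b. Proof. by []. Qed.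

Section Main.
Variables (d : Order.disp_t) (X : finPOrderType d) (F : fieldType).
Local Notation A := (incid X F).
Hypothesis hF2 : (2 : F) != 0.
Variable phi : A -> A.
Hypotheses (phi_bij : bijective phi) (phi_lin : incid_linear phi)
  (phi_idem : forall e, incid_idem e -> incid_idem (phi e)).

Lemma phiD f g : phi (f + g) = phi f + phi g.
Proof. have h : phi (1 *: f + g) = 1 *: phi f + phi g := phi_lin 1 f g. by rewrite !scale1r in h. Qed.
Lemma phi0 : phi 0 = 0.
Proof.
have h := phiD 0 0; rewrite addr0 in h.
by move/(congr1 (fun z => z - phi 0)): h; rewrite addrK subrr => /esym.
Qed.
Lemma phiZ a f : phi (a *: f) = a *: phi f.
Proof. have h : phi (a *: f + 0) = a *: phi f + phi 0 := phi_lin a f 0. by rewrite addr0 phi0 addr0 in h. Qed.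
Lemma phiN f : phi (- f) = - phi f.
Proof. by rewrite -scaleN1r phiZ scaleN1r. Qed.
Lemma phiB f g : phi (f - g) = phi f - phi g.
Proof. by rewrite phiD phiN. Qed.
Lemma phi_sum I (s : seq I) (Pr : pred I) (G : I -> A) :
  phi (\sum_(i <- s | Pr i) G i) = \sum_(i <- s | Pr i) phi (G i).
Proof. exact: (big_morph phi phiD phi0). Qed.
Lemma phi_inj : injective phi. Proof. exact: bij_inj. Qed.
Lemma phiI (g : A) : g * g = g -> phi g * phi g = phi g.
Proof. exact: phi_idem. Qed.

Local Notation e x := (E x x).
Local Notation P x := (phi (E x x)).
Local Notation Q x y := (phi (E x y)).

Ltac idem_tac :=
  rewrite !(mulrDl, mulrDr, mulrBl, mulrBr, mulrN, mulNr, opprK) !EE ?eqxx ?lexx.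
Ltac idem_fin :=
  rewrite ?andbT ?andbF ?andTb ?andFb ?ifT' ?ifF';
  apply: incid_ext => t; rewrite !(vD, vN, vB, v0); ring.

Lemma Pidem x : P x * P x = P x.
Proof. by apply: phiI; rewrite EE eqxx lexx. Qed.

Lemma Porth x y : x != y -> P x * P y = 0.
Proof.
move=> xy; apply: orth => //; try exact: Pidem.
apply: J0; try exact: Pidem.
rewrite -phiD; apply: phiI; idem_tac.
rewrite (negbTE xy) eq_sym (negbTE xy); idem_fin.
Qed.

Lemma PQ_lo x y : (x < y)%O -> P x * Q x y + Q x y * P x = Q x y.
Proof.
move=> lxy; have xy : (x == y) = false by rewrite lt_eqF.
have yx : (y == x) = false by rewrite eq_sym.
have le1 : (x <= y)%O by rewrite ltW.
apply: J2 => //; rewrite -?phiD -?phiB; apply: phiI; idem_tac;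
  rewrite ?xy ?yx ?le1; idem_fin.
Qed.

Lemma PQ_hi x y : (x < y)%O -> P y * Q x y + Q x y * P y = Q x y.
Proof.
move=> lxy; have xy : (x == y) = false by rewrite lt_eqF.
have yx : (y == x) = false by rewrite eq_sym.
have le1 : (x <= y)%O by rewrite ltW.
apply: J2 => //; rewrite -?phiD -?phiB; apply: phiI; idem_tac;
  rewrite ?xy ?yx ?le1; idem_fin.
Qed.

Lemma Qdec x y : (x < y)%O -> Q x y = P x * Q x y * P y + P y * Q x y * P x.
Proof.
move=> lxy; have xy : x != y by rewrite lt_eqF.
apply: decQ; rewrite ?Pidem ?Porth // 1?eq_sym //.
  exact: PQ_lo.
exact: PQ_hi.
Qed.

Lemma chainJ x y z : (x < y)%O -> (y < z)%O ->
  Q x y * Q y z + Q y z * Q x y = Q x z.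
Proof.
move=> lxy lyz; have lxz := lt_trans lxy lyz.
have xy : (x == y) = false by rewrite lt_eqF.
have yx : (y == x) = false by rewrite eq_sym.
have xz : (x == z) = false by rewrite lt_eqF.
have zx : (z == x) = false by rewrite eq_sym.
have yz : (y == z) = false by rewrite lt_eqF.
have zy : (z == y) = false by rewrite eq_sym.
have l1 : (x <= y)%O by rewrite ltW.
have l2 : (y <= z)%O by rewrite ltW.
have l3 : (x <= z)%O by rewrite ltW.
have n1 : (y <= x)%O = false by rewrite lt_geF.
have n2 : (z <= y)%O = false by rewrite lt_geF.
have n3 : (z <= x)%O = false by rewrite lt_geF.
have H1 := @J2 _ _ _ hF2 (phi (e x + e z + E x y)) (phi (E y z - E x z)).
have H2 := @J2 _ _ _ hF2 (phi (e x + e z - E x y)) (phi (E y z + E x z)).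
have {}H1 : phi (e x + e z + E x y) * phi (E y z - E x z) +
   phi (E y z - E x z) * phi (e x + e z + E x y) = phi (E y z - E x z).
  by apply: H1; rewrite -?phiD -?phiB; apply: phiI; idem_tac;
    rewrite ?xy ?yx ?xz ?zx ?yz ?zy ?l1 ?l2 ?l3 ?n1 ?n2 ?n3; idem_fin.
have {}H2 : phi (e x + e z - E x y) * phi (E y z + E x z) +
   phi (E y z + E x z) * phi (e x + e z - E x y) = phi (E y z + E x z).
  by apply: H2; rewrite -?phiD -?phiB; apply: phiI; idem_tac;
    rewrite ?xy ?yx ?xz ?zx ?yz ?zy ?l1 ?l2 ?l3 ?n1 ?n2 ?n3; idem_fin.
have H3 := PQ_lo lxz; have H4 := PQ_hi lxz.
rewrite !(phiD, phiN) !(mulrDl, mulrDr, mulrBl, mulrBr, mulrN, mulNr, opprK) in H1 H2.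
apply/eqP; rewrite -subr_eq0; apply/eqP; apply: (tf hF2).
apply: incid_ext => t.
move/(congr1 (fun g : A => val g t)): H1; rewrite ?(vD, vN, vB, v0) => H1.
move/(congr1 (fun g : A => val g t)): H2; rewrite ?(vD, vN, vB, v0) => H2.
move/(congr1 (fun g : A => val g t)): H3; rewrite ?(vD, vN, vB, v0) => H3.
move/(congr1 (fun g : A => val g t)): H4; rewrite ?(vD, vN, vB, v0) => H4.
by apply: (lc4 (k1 := 1) (k2 := -1) (k3 := 2) (k4 := 2) _ H1 H2 H3 H4); ring.
Qed.

End Main.


Section Sig.
Variables (d : Order.disp_t) (X : finPOrderType d) (F : fieldType).
Local Notation A := (incid X F).
Hypothesis hF2 : (2 : F) != 0.
Variable phi : A -> A.
Hypotheses (phi_bij : bijective phi) (phi_lin : incid_linear phi)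
  (phi_idem : forall e, incid_idem e -> incid_idem (phi e)).

Local Notation e x := (E x x).
Local Notation P x := (phi (E x x)).
Local Notation Q x y := (phi (E x y)).

Let pidem := Pidem phi_idem.
Let porth := Porth hF2 phi_lin phi_idem.
Let qdec := Qdec hF2 phi_lin phi_idem.
Let chain := chainJ hF2 phi_lin phi_idem.
Let p0 := phi0 phi_lin.
Let pinj := phi_inj phi_bij.


Lemma vEd s t : val (e s : A) (t, t) = if t == s then 1 else 0.
Proof. by rewrite vE lexx andbT xpair_eqE andbb. Qed.

Lemma Enz x y : (x <= y)%O -> E x y != 0 :> A.
Proof.
move=> lxy; apply/negP => /eqP h.
have := congr1 (fun f : A => val f (x, y)) h.
by rewrite vE v0 eqxx lxy /= => /eqP; rewrite oner_eq0.
Qed.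

Lemma phinz x y : (x <= y)%O -> Q x y != 0.
Proof.
move=> lxy; apply/negP => /eqP h; have : Q x y = phi 0 by rewrite h p0.
by move/pinj/eqP; rewrite (negbTE (Enz lxy)).
Qed.

Lemma Pdiag01 x t : val (P x) (t, t) = 0 \/ val (P x) (t, t) = 1.
Proof.
have := congr1 (fun f : A => val f (t, t)) (pidem x); rewrite vdiag => h.
have : val (P x) (t, t) * (val (P x) (t, t) - 1) = 0 by rewrite mulrBr h mulr1 subrr.
by move/eqP; rewrite mulf_eq0 subr_eq0 => /orP[/eqP|/eqP]; [left|right].
Qed.

Lemma Pex x : exists t, val (P x) (t, t) != 0.
Proof.
case: (boolP [exists t, val (P x) (t, t) != 0]) => [/existsP //|].
rewrite negb_exists => /forallP H.
have u1 : forall t, val (1 - P x) (t, t) = 1.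
  by move=> t; rewrite vB v1 eqxx (eqP (negPn (H t))) subr0.
have : (1 - P x) * P x = 0 by rewrite mulrBl mul1r pidem subrr.
by move/(cancel_l u1)/eqP; rewrite (negbTE (phinz (lexx x))).
Qed.

Definition sig x := odflt x [pick t | val (P x) (t, t) != 0].

Lemma sigP x : val (P x) (sig x, sig x) = 1.
Proof.
rewrite /sig; case: pickP => [t /= ht|none] /=.
  by case: (Pdiag01 x t) => // h; rewrite h eqxx in ht.
by have [t] := Pex x; rewrite none.
Qed.

Lemma Ddisj x y t : x != y -> val (P x) (t, t) * val (P y) (t, t) = 0.
Proof. by move=> xy; rewrite -vdiag porth // v0. Qed.

Lemma sig_inj : injective sig.
Proof.
move=> x y sxy; apply/eqP; apply/negP => /negP xy.
by have := Ddisj (sig x) xy; rewrite sigP mul1r sxy sigP => /eqP; rewrite oner_eq0.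
Qed.

Definition sinv := invF sig_inj.
Lemma sig_sinv t : sig (sinv t) = t. Proof. exact: f_invF. Qed.

Lemma sigP' t : val (P (sinv t)) (t, t) = 1.
Proof. by have := sigP (sinv t); rewrite sig_sinv. Qed.

Lemma supp x t : val (P x) (t, t) != 0 -> t = sig x.
Proof.
move=> h; have [xy|xy] := eqVneq x (sinv t); first by rewrite xy sig_sinv.
have := Ddisj t xy; rewrite sigP' mulr1 => h0.
by rewrite h0 eqxx in h.
Qed.

Definition uu : A := \sum_x e (sig x) * P x.
Definition vv : A := \sum_x P x * e (sig x).

Lemma uu_diag t : val uu (t, t) = 1.
Proof.
rewrite /uu vsum; under eq_bigr => x _ do rewrite vdiag vEd.
rewrite (bigD1 (sinv t)) //= sig_sinv eqxx mul1r sigP' big1 ?addr0 // => x xt.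
case: eqP => [tx|]; last by rewrite mul0r.
by rewrite tx /sinv invF_f eqxx in xt.
Qed.

Lemma vv_diag t : val vv (t, t) = 1.
Proof.
rewrite /vv vsum; under eq_bigr => x _ do rewrite vdiag vEd.
rewrite (bigD1 (sinv t)) //= sig_sinv eqxx mulr1 sigP' big1 ?addr0 // => x xt.
case: eqP => [tx|]; last by rewrite mulr0.
by rewrite tx /sinv invF_f eqxx in xt.
Qed.

Lemma ua x a : P x * a = a -> uu * a = e (sig x) * a.
Proof.
move=> Ha; rewrite /uu mulr_suml (bigD1 x) //= -mulrA Ha big1 ?addr0 // => z zx.
by rewrite -Ha !mulrA -(mulrA _ (P z)) porth // mulr0 !mul0r.
Qed.

Lemma av y a : a * P y = a -> a * vv = a * e (sig y).
Proof.
move=> Ha; rewrite /vv mulr_sumr (bigD1 y) //= mulrA Ha big1 ?addr0 // => z zy.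
by rewrite -Ha -!mulrA (mulrA (P y)) porth 1?eq_sym // mul0r !mulr0.
Qed.

Lemma dir x y a : P x * a = a -> a * P y = a -> a != 0 -> (sig x <= sig y)%O.
Proof.
move=> Hx Hy anz; apply/negP => ns.
have h : uu * (a * vv) = 0.
  by rewrite mulrA (ua Hx) -mulrA (av Hy) mulrA; apply: eAe; apply/negP.
by move: anz; rewrite (cancel_r vv_diag (cancel_l uu_diag h)) eqxx.
Qed.

Lemma sig_lt_lt x y : (x < y)%O ->
  (sig x < sig y)%O && (Q x y == P x * Q x y * P y) ||
  (sig y < sig x)%O && (Q x y == P y * Q x y * P x).
Proof.
move=> lxy; have xy : x != y by rewrite lt_eqF.
have sxy : sig x != sig y by apply: contra xy => /eqP/sig_inj ->.
have Ax : P x * (P x * Q x y * P y) = P x * Q x y * P y by rewrite !mulrA pidem.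
have Ax' : (P x * Q x y * P y) * P y = P x * Q x y * P y by rewrite -mulrA pidem.
have Bx : P y * (P y * Q x y * P x) = P y * Q x y * P x by rewrite !mulrA pidem.
have Bx' : (P y * Q x y * P x) * P x = P y * Q x y * P x by rewrite -mulrA pidem.
have [A0|Anz] := eqVneq (P x * Q x y * P y) 0.
  have [B0|Bnz] := eqVneq (P y * Q x y * P x) 0.
    by move: (phinz (ltW lxy)); rewrite (qdec lxy) A0 B0 addr0 eqxx.
  have le := dir Bx Bx' Bnz.
  apply/orP; right; apply/andP; split; first by rewrite lt_def sxy le.
  by rewrite {1}(qdec lxy) A0 add0r.
have le := dir Ax Ax' Anz.
have [B0|Bnz] := eqVneq (P y * Q x y * P x) 0.
  apply/orP; left; apply/andP; split; first by rewrite lt_def eq_sym sxy le.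
  by rewrite {1}(qdec lxy) B0 addr0.
have le' := dir Bx Bx' Bnz.
by move: sxy; rewrite (le_anti (introT andP (conj le le'))) eqxx.
Qed.

Lemma fwd x y : (x < y)%O -> (sig x < sig y)%O -> Q x y = P x * Q x y * P y.
Proof.
move=> lxy lt; case/orP: (sig_lt_lt lxy) => /andP[h /eqP //].
by rewrite lt_gtF in h.
Qed.

Lemma bwd x y : (x < y)%O -> (sig y < sig x)%O -> Q x y = P y * Q x y * P x.
Proof.
move=> lxy lt; case/orP: (sig_lt_lt lxy) => /andP[h /eqP //].
by rewrite lt_gtF in h.
Qed.

Lemma sig_cmp_lt x y : (x < y)%O -> (sig x < sig y)%O || (sig y < sig x)%O.
Proof. by move=> lxy; case/orP: (sig_lt_lt lxy) => /andP[-> _]; rewrite ?orbT. Qed.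

Lemma chain_contra1 x y z : (x < y)%O -> (y < z)%O ->
  (sig x < sig y)%O -> (sig z < sig y)%O -> False.
Proof.
move=> lxy lyz s1 s2; have lxz := lt_trans lxy lyz.
have yz : y != z by rewrite lt_eqF. have yx : y != x by rewrite gt_eqF.
have h1 : Q x y * Q y z = 0.
  rewrite (fwd lxy s1) (bwd lyz s2) !mulrA -(mulrA _ (P y) (P z)) porth //.
  by rewrite mulr0 !mul0r.
have h2 : Q y z * Q x y = 0.
  rewrite (fwd lxy s1) (bwd lyz s2) !mulrA -(mulrA _ (P y) (P x)) porth //.
  by rewrite mulr0 !mul0r.
by move: (phinz (ltW lxz)); rewrite -(chain lxy lyz) h1 h2 addr0 eqxx.
Qed.

Lemma chain_contra2 x y z : (x < y)%O -> (y < z)%O ->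
  (sig y < sig x)%O -> (sig y < sig z)%O -> False.
Proof.
move=> lxy lyz s1 s2; have lxz := lt_trans lxy lyz.
have xy : x != y by rewrite lt_eqF. have zy : z != y by rewrite gt_eqF.
have h1 : Q x y * Q y z = 0.
  rewrite (bwd lxy s1) (fwd lyz s2) !mulrA -(mulrA _ (P x) (P y)) porth //.
  by rewrite mulr0 !mul0r.
have h2 : Q y z * Q x y = 0.
  rewrite (bwd lxy s1) (fwd lyz s2) !mulrA -(mulrA _ (P z) (P y)) porth //.
  by rewrite mulr0 !mul0r.
by move: (phinz (ltW lxz)); rewrite -(chain lxy lyz) h1 h2 addr0 eqxx.
Qed.

End Sig.


Section Fin.
Variables (d : Order.disp_t) (X : finPOrderType d) (F : fieldType).
Local Notation A := (incid X F).
Hypothesis hF2 : (2 : F) != 0.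
Variable phi : A -> A.
Hypotheses (phi_bij : bijective phi) (phi_lin : incid_linear phi)
  (phi_idem : forall e, incid_idem e -> incid_idem (phi e)).

Local Notation e x := (E x x).
Local Notation P x := (phi (E x x)).
Local Notation Q x y := (phi (E x y)).

Let pidem := Pidem phi_idem.
Let porth := Porth hF2 phi_lin phi_idem.
Let chain := chainJ hF2 phi_lin phi_idem.
Let p0 := phi0 phi_lin.
Let s := sig phi.
Let sinj := sig_inj hF2 phi_bij phi_lin phi_idem.
Let scmp := sig_cmp_lt hF2 phi_bij phi_lin phi_idem.
Let c1 := chain_contra1 hF2 phi_bij phi_lin phi_idem.
Let c2 := chain_contra2 hF2 phi_bij phi_lin phi_idem.
Let fw' := fwd hF2 phi_bij phi_lin phi_idem.
Let bw' := bwd hF2 phi_bij phi_lin phi_idem.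

Lemma cmp_cases (a b : X) : (a >=< b)%O -> [\/ a = b, (a < b)%O | (b < a)%O].
Proof.
case/orP; rewrite le_eqVlt => /orP[/eqP->|lt]; by [constructor 1 | constructor 2 | constructor 1 | constructor 3].
Qed.

Lemma sig_cmp (a b : X) : (a >=< b)%O -> (s a >=< s b)%O.
Proof.
case/cmp_cases => [->|lt|lt]; first by rewrite comparablexx.
  by case/orP: (scmp lt) => h; rewrite /Order.comparable (ltW h) ?orbT.
by case/orP: (scmp lt) => h; rewrite /Order.comparable (ltW h) ?orbT.
Qed.

Lemma sig_refl (a b : X) : (s a >=< s b)%O -> (a >=< b)%O.
Proof.
pose S := [set p : X * X | (p.1 >=< p.2)%O].
pose f := fun p : X * X => (s p.1, s p.2).
have finj : injective f by move=> [a1 b1] [a2 b2] [/sinj-> /sinj->].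
have fS : f @: S \subset S.
  by apply/subsetP => q /imsetP[p pS ->]; rewrite inE /=; apply: sig_cmp; rewrite inE in pS.
have eqS : f @: S = S by apply/eqP; rewrite eqEcard fS card_imset // leqnn.
move=> h; have : (s a, s b) \in f @: S by rewrite eqS inE.
case/imsetP => -[p1 p2]; rewrite inE /= => pS [e1 e2].
by rewrite (sinj e1) (sinj e2).
Qed.

Definition fw (x y : X) := ((x < y)%O && (s x < s y)%O) || ((y < x)%O && (s y < s x)%O).
Definition bw (x y : X) := ((x < y)%O && (s y < s x)%O) || ((y < x)%O && (s x < s y)%O).

Lemma cmp_neq (y z : X) : (y >=< z)%O -> y != z -> (y < z)%O \/ (z < y)%O.
Proof. by case/cmp_cases => [->|h|h]; [rewrite eqxx | left | right]. Qed.

Lemma local (x y z : X) : fw x y -> bw x z -> False.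
Proof.
case/orP=> /andP[h1 h2]; case/orP=> /andP[h3 h4].
- have lt : (s z < s y)%O := lt_trans h4 h2.
  have yz : y != z by apply: contraTneq lt => ->; rewrite ltxx.
  have := sig_refl (lt_comparable lt); rewrite comparable_sym.
  case/cmp_neq => // h5; [exact: (c1 h1 h5 h2 lt) | exact: (c2 h3 h5 h4 lt)].
- exact: (c2 h3 h1 h4 h2).
- exact: (c1 h1 h3 h2 h4).
- have lt : (s y < s z)%O := lt_trans h2 h4.
  have yz : y != z by apply: contraTneq lt => ->; rewrite ltxx.
  have := sig_refl (lt_comparable lt).
  case/cmp_neq => // h5; [exact: (c1 h5 h3 lt h4) | exact: (c2 h5 h1 lt h2)].
Qed.

Lemma all_pairs (x y : X) : (x >=< y)%O -> x != y -> fw x y || bw x y.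
Proof.
move=> c xy; rewrite /fw /bw; case/cmp_neq: c => // h; rewrite h /=.
  by case/orP: (scmp h) => ->; rewrite ?orbT.
by rewrite lt_gtF //=; case/orP: (scmp h) => ->; rewrite ?orbT.
Qed.

Definition Fp := [pred x : X | [exists w, fw x w]].

Lemma fwC (x y : X) : fw x y = fw y x. Proof. by rewrite /fw orbC. Qed.
Lemma bwC (x y : X) : bw x y = bw y x. Proof. by rewrite /bw orbC. Qed.

Lemma Fp_closed (x y : X) : (x >=< y)%O -> (x \in Fp) = (y \in Fp).
Proof.
move=> c; have [->//|xy] := eqVneq x y.
case/orP: (all_pairs c xy) => h.
  by rewrite !inE; apply/idP/idP => _; apply/existsP; [exists x; rewrite fwC | exists y].
have hy : bw y x by rewrite bwC.
rewrite !inE; apply/idP/idP => /existsP[w hw]; first by case: (local hw h).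
by case: (local hw hy).
Qed.

Lemma mono_or_anti : (forall x y, connect (fun a b : X => (a >=< b)%O) x y) ->
  (forall x y, (x < y)%O -> (s x < s y)%O) \/ (forall x y, (x < y)%O -> (s y < s x)%O).
Proof.
move=> hX.
have conF : forall x y, (x \in Fp) = (y \in Fp).
  move=> x y; case/connectP: (hX x y) => p pth ->.
  elim: p x pth => //= z p IH x /andP[cxz pth].
  by rewrite (Fp_closed cxz) IH.
case: (boolP [exists x, x \in Fp]) => [/existsP[x0 Fx0]|none].
  left => x y lxy.
  have Fx : x \in Fp by rewrite (conF x x0).
  have := all_pairs (lt_comparable lxy) (negbT (lt_eqF lxy)).
  case/orP => [/orP[/andP[_ //]|/andP[h _]]|hb]; first by rewrite lt_gtF in h.
  by case/existsP: Fx => w hw; case: (local hw hb).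
right => x y lxy.
have := all_pairs (lt_comparable lxy) (negbT (lt_eqF lxy)).
case/orP => [hf|/orP[/andP[_ //]|/andP[h _]]]; last by rewrite lt_gtF in h.
by move: none; rewrite negb_exists => /forallP/(_ x); rewrite inE; case/existsP; exists y.
Qed.

End Fin.


Section Mult.
Variables (d : Order.disp_t) (X : finPOrderType d) (F : fieldType).
Local Notation A := (incid X F).
Hypothesis hF2 : (2 : F) != 0.
Variable phi : A -> A.
Hypotheses (phi_bij : bijective phi) (phi_lin : incid_linear phi)
  (phi_idem : forall e, incid_idem e -> incid_idem (phi e)).

Local Notation e x := (E x x).
Local Notation P x := (phi (E x x)).
Local Notation Q x y := (phi (E x y)).

Let pidem := Pidem phi_idem.
Let porth := Porth hF2 phi_lin phi_idem.
Let chain := chainJ hF2 phi_lin phi_idem.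
Let p0 := phi0 phi_lin.
Let s := sig phi.
Let fw' := fwd hF2 phi_bij phi_lin phi_idem.
Let bw' := bwd hF2 phi_bij phi_lin phi_idem.

Lemma E0 (a b : X) : ~~ (a <= b)%O -> E a b = 0 :> A.
Proof. by move=> ab; apply: incid_ext => p; rewrite vE v0 (negbTE ab) andbF. Qed.

Lemma lin_exp (f : A) : phi f = \sum_p val f p *: Q p.1 p.2.
Proof.
rewrite {1}(decomp f) (big_morph phi (phiD phi_lin) p0).
by apply: eq_bigr => p _; rewrite phiZ.
Qed.

Lemma prod_exp (a b : X * X -> F) (U V : X * X -> A) :
  (\sum_p a p *: U p) * (\sum_q b q *: V q) = \sum_p \sum_q (a p * b q) *: (U p * V q).
Proof.
rewrite mulr_suml; apply: eq_bigr => p _; rewrite mulr_sumr; apply: eq_bigr => q _.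
by rewrite scalerAl' scalerAr' scalerA.
Qed.

Lemma fg_exp (f g : A) :
  f * g = \sum_p \sum_q (val f p * val g q) *: (E p.1 p.2 * E q.1 q.2).
Proof. by rewrite {1}(decomp f) {1}(decomp g) prod_exp. Qed.

Lemma phi_fg (f g : A) :
  phi (f * g) = \sum_p \sum_q (val f p * val g q) *: phi (E p.1 p.2 * E q.1 q.2).
Proof.
rewrite fg_exp (big_morph phi (phiD phi_lin) p0); apply: eq_bigr => p _.
rewrite (big_morph phi (phiD phi_lin) p0); apply: eq_bigr => q _.
by rewrite phiZ.
Qed.

Section Mono.
Hypothesis H : forall x y, (x < y)%O -> (s x < s y)%O.

Lemma R1 a b : (a <= b)%O -> Q a b = P a * Q a b * P b.
Proof.
rewrite le_eqVlt => /orP[/eqP->|lt]; first by rewrite !pidem.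
exact: fw' lt (H lt).
Qed.
Lemma RL a b : (a <= b)%O -> Q a b * P b = Q a b.
Proof. by move=> ab; rewrite {1}(R1 ab) -mulrA pidem -(R1 ab). Qed.
Lemma RR a b : (a <= b)%O -> P a * Q a b = Q a b.
Proof. by move=> ab; rewrite {1}(R1 ab) !mulrA pidem -(R1 ab). Qed.

Lemma basis_mono a b c d' : phi (E a b * E c d') = Q a b * Q c d'.
Proof.
case: (boolP (a <= b)%O) => ab; last by rewrite (E0 ab) mul0r p0 mul0r.
case: (boolP (c <= d')%O) => cd; last by rewrite (E0 cd) mulr0 p0 mulr0.
rewrite EE ab cd !andbT.
have [bc|bc] := eqVneq b c; last first.
  have -> : Q a b * Q c d' = (Q a b * P b) * (P c * Q c d') by rewrite (RL ab) (RR cd).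
  by rewrite mulrA -(mulrA _ (P b)) porth // mulr0 mul0r p0.
subst c.
have [ab'|ab'] := eqVneq a b; first by subst a; rewrite RR.
have [bd|bd] := eqVneq b d'; first by subst d'; rewrite RL.
have lt1 : (a < b)%O by rewrite lt_neqAle ab' ab.
have lt2 : (b < d')%O by rewrite lt_neqAle bd cd.
have ad : d' != a by rewrite gt_eqF // (lt_trans lt1 lt2).
rewrite -(chain lt1 lt2).
have -> : Q b d' * Q a b = (Q b d' * P d') * (P a * Q a b) by rewrite (RL cd) (RR ab).
by rewrite mulrA -(mulrA _ (P d')) porth // mulr0 mul0r addr0.
Qed.

Lemma mult_mono (f g : A) : phi (f * g) = phi f * phi g.
Proof.
rewrite phi_fg (lin_exp f) (lin_exp g) prod_exp; apply: eq_bigr => p _.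
by apply: eq_bigr => q _; rewrite basis_mono.
Qed.
End Mono.

Section Anti.
Hypothesis H : forall x y, (x < y)%O -> (s y < s x)%O.

Lemma R1' a b : (a <= b)%O -> Q a b = P b * Q a b * P a.
Proof.
rewrite le_eqVlt => /orP[/eqP->|lt]; first by rewrite !pidem.
exact: bw' lt (H lt).
Qed.
Lemma RL' a b : (a <= b)%O -> Q a b * P a = Q a b.
Proof. by move=> ab; rewrite {1}(R1' ab) -mulrA pidem -(R1' ab). Qed.
Lemma RR' a b : (a <= b)%O -> P b * Q a b = Q a b.
Proof. by move=> ab; rewrite {1}(R1' ab) !mulrA pidem -(R1' ab). Qed.

Lemma basis_anti a b c d' : phi (E a b * E c d') = Q c d' * Q a b.
Proof.
case: (boolP (a <= b)%O) => ab; last by rewrite (E0 ab) mul0r p0 mulr0.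
case: (boolP (c <= d')%O) => cd; last by rewrite (E0 cd) mulr0 p0 mul0r.
rewrite EE ab cd !andbT.
have [bc|bc] := eqVneq b c; last first.
  have -> : Q c d' * Q a b = (Q c d' * P c) * (P b * Q a b) by rewrite (RL' cd) (RR' ab).
  by rewrite mulrA -(mulrA _ (P c)) porth 1?eq_sym // mulr0 mul0r p0.
subst c.
have [ab'|ab'] := eqVneq a b; first by subst a; rewrite RL'.
have [bd|bd] := eqVneq b d'; first by subst d'; rewrite RR'.
have lt1 : (a < b)%O by rewrite lt_neqAle ab' ab.
have lt2 : (b < d')%O by rewrite lt_neqAle bd cd.
have ad : a != d' by rewrite lt_eqF // (lt_trans lt1 lt2).
rewrite -(chain lt1 lt2).
have -> : Q a b * Q b d' = (Q a b * P a) * (P d' * Q b d') by rewrite (RL' ab) (RR' cd).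
by rewrite mulrA -(mulrA _ (P a)) porth // mulr0 mul0r add0r.
Qed.

Lemma mult_anti (f g : A) : phi (f * g) = phi g * phi f.
Proof.
rewrite phi_fg (lin_exp f) (lin_exp g) prod_exp exchange_big; apply: eq_bigr => p _.
by apply: eq_bigr => q _; rewrite basis_anti mulrC.
Qed.
End Anti.

End Mult.


Unset Implicit Arguments.
Theorem corollary4p5 (d : Order.disp_t) (X : finPOrderType d) (F : fieldType)
  (hX : poset_connected X) (hF : (2 \notin [pchar F])%N)
  (phi : incid X F -> incid X F) :
  bijective phi -> incid_linear phi ->
  (forall e, incid_idem e -> incid_idem (phi e)) ->
  incid_automorphism phi \/ incid_antiautomorphism phi.
Proof.
move=> bij lin idem.
have hF2 : (2 : F) != 0.
  by apply: contra hF => h; rewrite inE /= h.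
have [psi phipsi psiphi] := bij.
case: (mono_or_anti hF2 bij lin idem hX) => [H|H]; [left|right].
  have mul := mult_mono hF2 bij lin idem H.
  split => //.
  have := mul 1 (psi 1); rewrite GRing.mul1r psiphi GRing.mulr1.
  by move=> /esym.
have mul := mult_anti hF2 bij lin idem H.
split => //.
have := mul (psi 1) 1; rewrite GRing.mulr1 psiphi GRing.mulr1.
by move=> /esym.
Qed.
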